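(* Let $\kappa>-1$ and $\Gamma$ a constant real $n\times r$ matrix. For a curve $(X(t),P(t))$ in $T^*V(n,r)$ set $\Phi=PX^T-XP^T\in so(n)$ and $\Psi=X^TP-P^TX\in so(r)$. Then the system $$\dot X=P-(1+2\kappa)XP^TX,\qquad \dot P=(1+2\kappa)PX^TP-\Gamma+X\Lambda,\qquad \Lambda=\tfrac12\left(-2P^TP+X^T\Gamma+\Gamma^TX\right)$$ is equivalent to the system $$\dot X=\Phi X+\kappa X\Psi,\qquad \dot\Phi=X\Gamma^T-\Gamma X^T,\qquad \dot\Psi=\Gamma^TX-X^T\Gamma.$$
   Context: $V(n,r)=\{X\in M_{n,r}(\mathbb R):X^TX=\mathbf I_r\}$, and $T^*V(n,r)$ is realized as the set of pairs $(X,P)$ of real $n\times r$ matrices with $X^TX=\mathbf I_r$, $X^TP+P^TX=0$. The first system is the Hamiltonian flow of $H=\frac12\operatorname{tr}(P^TP)-\frac{1+2\kappa}{2}\operatorname{tr}((XP^T)^2)+\operatorname{tr}(X^T\Gamma)$ on $T^*V(n,r)$; $\Phi$ and $\Psi$ are the momentum mappings of the left $SO(n)$- and right $SO(r)$-actions. *)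

(* Defs.v *)
From mathcomp Require Import all_boot all_algebra.
From mathcomp Require Import all_classical all_reals all_analysis.
Import GRing.Theory Num.Theory numFieldNormedType.Exports.

Set Implicit Arguments.
Unset Strict Implicit.
Unset Printing Implicit Defensive.

Local Open Scope ring_scope.

Definition in_TstarV (R : realType) (n r : nat) (X P : 'M[R]_(n, r)) : Prop :=
  X^T *m X = 1%:M /\ X^T *m P + P^T *m X = 0.

Definition Phi (R : realType) (n r : nat) (X P : 'M[R]_(n, r)) : 'M[R]_n :=
  P *m X^T - X *m P^T.
Definition Psi (R : realType) (n r : nat) (X P : 'M[R]_(n, r)) : 'M[R]_r :=
  X^T *m P - P^T *m X.

Definition Lambda (R : realType) (n r : nat) (Gamma X P : 'M[R]_(n, r)) : 'M[R]_r :=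
  2^-1 *: (- (2%:R *: (P^T *m P)) + X^T *m Gamma + Gamma^T *m X).

Definition system1 (R : realType) (n r : nat) (kappa : R) (Gamma : 'M[R]_(n, r))
    (X P : R -> 'M[R]_(n, r)) (t : R) : Prop :=
  derive1 X t = P t - (1 + 2%:R * kappa) *: (X t *m (P t)^T *m X t) /\
  derive1 P t = (1 + 2%:R * kappa) *: (P t *m (X t)^T *m P t) - Gamma
                + X t *m Lambda Gamma (X t) (P t).

Definition system2 (R : realType) (n r : nat) (kappa : R) (Gamma : 'M[R]_(n, r))
    (X P : R -> 'M[R]_(n, r)) (t : R) : Prop :=
  derive1 X t = Phi (X t) (P t) *m X t + kappa *: (X t *m Psi (X t) (P t)) /\
  derive1 (fun s => Phi (X s) (P s)) t = X t *m Gamma^T - Gamma *m (X t)^T /\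
  derive1 (fun s => Psi (X s) (P s)) t = Gamma^T *m X t - (X t)^T *m Gamma.

(* Main.v *)
Require Import Defs.
From mathcomp Require Import all_boot all_algebra.
From mathcomp Require Import all_classical all_reals all_analysis.
From mathcomp Require Import ring lra.
Import GRing.Theory Num.Theory numFieldNormedType.Exports.
Local Open Scope ring_scope.

Section D.
Variable R : realType.

Lemma entry_fun m p q (A : R -> 'M[R]_(m,q)) (B : R -> 'M[R]_(q,p)) i j :
  (fun x => (A x *m B x) i j) = \sum_(k < q) (fun x => A x i k * B x k j).
Proof. apply/funext => x; rewrite mxE fct_sumE. by []. Qed.

Lemma derivable_mulmx m p q (A : R -> 'M[R]_(m,q)) (B : R -> 'M[R]_(q,p)) t :
  derivable A t 1 -> derivable B t 1 -> derivable (fun s => A s *m B s) t 1.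
Proof.
move=> /derivable_mxP dA /derivable_mxP dB; apply/derivable_mxP => i j.
rewrite entry_fun; apply: derivable_sum => k.
exact: (derivableM (dA i k) (dB k j)).
Qed.

Lemma derive_mulmx m p q (A : R -> 'M[R]_(m,q)) (B : R -> 'M[R]_(q,p)) t :
  derivable A t 1 -> derivable B t 1 ->
  'D_1 (fun s => A s *m B s) t = 'D_1 A t *m B t + A t *m 'D_1 B t.
Proof.
move=> hA hB; rewrite derive_mx; last exact: derivable_mulmx.
rewrite (derive_mx hA) (derive_mx hB).
move/derivable_mxP: hA => dA; move/derivable_mxP: hB => dB.
apply/matrixP => i j; rewrite !mxE entry_fun derive_sum => [|k]; last first.
  exact: (derivableM (dA i k) (dB k j)).
rewrite -big_split /=; apply: eq_bigr => k _.
rewrite (deriveM (dA i k) (dB k j)) !mxE /=.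
by rewrite addrC [_ * B t k j]mulrC.
Qed.

Lemma derivable_tr m p (A : R -> 'M[R]_(m,p)) t :
  derivable A t 1 -> derivable (fun s => (A s)^T) t 1.
Proof.
move=> /derivable_mxP dA; apply/derivable_mxP => i j.
have -> : (fun x => (A x)^T i j) = (fun x => A x j i) by apply/funext => x; rewrite mxE.
exact: dA.
Qed.

Lemma derive_tr m p (A : R -> 'M[R]_(m,p)) t :
  derivable A t 1 -> 'D_1 (fun s => (A s)^T) t = ('D_1 A t)^T.
Proof.
move=> hA; rewrite derive_mx; last exact: derivable_tr.
rewrite (derive_mx hA); apply/matrixP => i j; rewrite !mxE.
by have -> : (fun x => (A x)^T i j) = (fun x => A x j i) by apply/funext => x; rewrite mxE.
Qed.
End D.
Arguments derive_mulmx {R m p q A B t}.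
Arguments derivable_mulmx {R m p q A B t}.
Arguments derive_tr {R m p A t}.
Arguments derivable_tr {R m p A t}.
Lemma trZ (R : realType) m p (a : R) (A : 'M[R]_(m,p)) : (a *: A)^T = a *: A^T.
Proof. by apply/matrixP => i j; rewrite !mxE. Qed.

Lemma trD (R : realType) m p (A B : 'M[R]_(m,p)) : (A + B)^T = A^T + B^T.
Proof. by apply/matrixP => i j; rewrite !mxE. Qed.
Lemma trN (R : realType) m p (A : 'M[R]_(m,p)) : (- A)^T = - A^T.
Proof. by apply/matrixP => i j; rewrite !mxE. Qed.

Ltac mnorm := repeat progress (rewrite ?(mulmxDl, mulmxDr, mulmxBl, mulmxBr, mulNmx, mulmxN, mulmxA, trmx_mul, trmxK, trD, trN, scalerDr, scalerBr, scalerN, opprD, opprK, mulmx1, mul1mx, trZ); rewrite -?scalemxAl -?scalemxAr ?scalerA).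

Ltac mclose := apply/matrixP => i j;
  do 30 (try match goal with |- context[?A *m ?B] => let v := fresh "v" in set v := (A *m B); clearbody v end);
  rewrite !mxE; (ring || (field; rewrite ?pnatr_eq0 //)).


Lemma alg1 (R : realType) n r (k : R) (X P : 'M[R]_(n,r)) :
  X^T *m X = 1%:M -> X^T *m P + P^T *m X = 0 ->
  Phi X P *m X + k *: (X *m Psi X P) = P - (1 + 2%:R * k) *: (X *m P^T *m X).
Proof.
move=> hXX hc.
have hc' : X^T *m P = - (P^T *m X) by apply/eqP; rewrite -subr_eq0 opprK hc.
have hXX' : forall m (A : 'M[R]_(m,r)), A *m X^T *m X = A by move=> m A; rewrite -mulmxA hXX mulmx1.
have hc'' : forall m (A : 'M[R]_(m,r)), A *m X^T *m P = - (A *m P^T *m X) by move=> m A; rewrite -mulmxA hc' mulmxN mulmxA.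
rewrite /Phi /Psi. mnorm. rewrite ?hXX' ?hc''. mnorm.
rewrite -addrA; congr (_ + _).
rewrite -!opprD; congr (- _).
by rewrite scalerDl scale1r mulr_natl mulr2n scalerDl.
Qed.

Lemma alg2a (R : realType) n r (c : R) (G X P X' P' : 'M[R]_(n,r)) :
  X' = P - c *: (X *m P^T *m X) ->
  P' = c *: (P *m X^T *m P) - G + X *m Lambda G X P ->
  P' *m X^T + P *m X'^T - (X' *m P^T + X *m P'^T) = X *m G^T - G *m X^T.
Proof.
move=> -> ->; rewrite /Lambda. mnorm. mclose.
Qed.

Lemma algPsi (R : realType) n r (c : R) (G X P X' P' : 'M[R]_(n,r)) :
  X^T *m X = 1%:M ->
  X' = P - c *: (X *m P^T *m X) ->
  P' = c *: (P *m X^T *m P) - G + X *m Lambda G X P ->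
  X'^T *m P + X^T *m P' - (P'^T *m X + P^T *m X') = G^T *m X - X^T *m G.
Proof.
move=> hXX -> ->.
have hXX' : forall m (A : 'M[R]_(m,r)), A *m X^T *m X = A by move=> m A; rewrite -mulmxA hXX mulmx1.
rewrite /Lambda; mnorm; rewrite ?hXX ?hXX'; mnorm. mclose.
Qed.

Lemma algP0 (R : realType) n r (X P : 'M[R]_(n,r)) :
  X^T *m X = 1%:M -> X^T *m P + P^T *m X = 0 ->
  P = Phi X P *m X - 2^-1 *: (X *m Psi X P).
Proof.
move=> hXX hc.
have hc' : X^T *m P = - (P^T *m X) by apply/eqP; rewrite -subr_eq0 opprK hc.
have hXX' : forall m (A : 'M[R]_(m,r)), A *m X^T *m X = A by move=> m A; rewrite -mulmxA hXX mulmx1.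
have hc'' : forall m (A : 'M[R]_(m,r)), A *m X^T *m P = - (A *m P^T *m X) by move=> m A; rewrite -mulmxA hc' mulmxN mulmxA.
rewrite /Phi /Psi; mnorm; rewrite ?hXX' ?hc''; mnorm. mclose.
Qed.

Lemma algP (R : realType) n r (c : R) (G X P X' : 'M[R]_(n,r)) :
  X^T *m X = 1%:M -> X^T *m P + P^T *m X = 0 ->
  X' = P - c *: (X *m P^T *m X) ->
  (X *m G^T - G *m X^T) *m X + Phi X P *m X'
    - 2^-1 *: (X' *m Psi X P + X *m (G^T *m X - X^T *m G))
  = c *: (P *m X^T *m P) - G + X *m Lambda G X P.
Proof.
move=> hXX hc ->.
have hc' : X^T *m P = - (P^T *m X) by apply/eqP; rewrite -subr_eq0 opprK hc.
have hXX' : forall m (A : 'M[R]_(m,r)), A *m X^T *m X = A by move=> m A; rewrite -mulmxA hXX mulmx1.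
have hc'' : forall m (A : 'M[R]_(m,r)), A *m X^T *m P = - (A *m P^T *m X) by move=> m A; rewrite -mulmxA hc' mulmxN mulmxA.
rewrite /Phi /Psi /Lambda; mnorm; rewrite ?hXX ?hXX' ?hc' ?hc''; mnorm. mclose.
Qed.

Section Der.
Variables (R : realType) (n r : nat) (X P : R -> 'M[R]_(n,r)) (t : R).
Hypotheses (hX : derivable X t 1) (hP : derivable P t 1).

Lemma derivable_Phi : derivable (fun s => Phi (X s) (P s)) t 1.
Proof.
have -> : (fun s => Phi (X s) (P s)) = (fun s => P s *m (X s)^T) - (fun s => X s *m (P s)^T).
  by apply/funext => s.
apply: derivableB; apply: derivable_mulmx => //; exact: derivable_tr.
Qed.

Lemma derivable_Psi : derivable (fun s => Psi (X s) (P s)) t 1.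
Proof.
have -> : (fun s => Psi (X s) (P s)) = (fun s => (X s)^T *m P s) - (fun s => (P s)^T *m X s).
  by apply/funext => s.
apply: derivableB; apply: derivable_mulmx => //; exact: derivable_tr.
Qed.

Lemma derive_Phi : 'D_1 (fun s => Phi (X s) (P s)) t =
  'D_1 P t *m (X t)^T + P t *m ('D_1 X t)^T - ('D_1 X t *m (P t)^T + X t *m ('D_1 P t)^T).
Proof.
have -> : (fun s => Phi (X s) (P s)) = (fun s => P s *m (X s)^T) - (fun s => X s *m (P s)^T).
  by apply/funext => s.
rewrite deriveB; try (apply: derivable_mulmx => //; exact: derivable_tr).
by rewrite !derive_mulmx ?derive_tr //; exact: derivable_tr.
Qed.

Lemma derive_Psi : 'D_1 (fun s => Psi (X s) (P s)) t =
  ('D_1 X t)^T *m P t + (X t)^T *m 'D_1 P t - (('D_1 P t)^T *m X t + (P t)^T *m 'D_1 X t).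
Proof.
have -> : (fun s => Psi (X s) (P s)) = (fun s => (X s)^T *m P s) - (fun s => (P s)^T *m X s).
  by apply/funext => s.
rewrite deriveB; try (apply: derivable_mulmx => //; exact: derivable_tr).
by rewrite !derive_mulmx ?derive_tr //; exact: derivable_tr.
Qed.

Lemma derive_P0 (heq : P = fun s => Phi (X s) (P s) *m X s - 2^-1 *: (X s *m Psi (X s) (P s))) :
  'D_1 P t = 'D_1 (fun s => Phi (X s) (P s)) t *m X t + Phi (X t) (P t) *m 'D_1 X t
    - 2^-1 *: ('D_1 X t *m Psi (X t) (P t) + X t *m 'D_1 (fun s => Psi (X s) (P s)) t).
Proof.
have -> : 'D_1 P t = 'D_1 ((fun s => Phi (X s) (P s) *m X s) - 2^-1 \*: (fun s => X s *m Psi (X s) (P s))) t.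
  by rewrite {1}heq.
have d1 : derivable (fun s => Phi (X s) (P s) *m X s) t 1.
  by apply: derivable_mulmx => //; exact: derivable_Phi.
have d2 : derivable (fun s => X s *m Psi (X s) (P s)) t 1.
  by apply: derivable_mulmx => //; exact: derivable_Psi.
have dF := derivable_Phi.
have dS := derivable_Psi.
have dZ : derivable (2^-1 \*: (fun s => X s *m Psi (X s) (P s))) t 1 by apply: derivableZ.
rewrite (deriveB d1 dZ).
rewrite deriveZ; last exact: d2.
by rewrite (derive_mulmx dF hX) (derive_mulmx hX dS).
Qed.
End Der.

Theorem lemma3 (R : realType) (n r : nat) (kappa : R) (Gamma : 'M[R]_(n, r))
    (X P : R -> 'M[R]_(n, r)) :
  -1 < kappa ->
  (forall t, derivable X t 1) ->
  (forall t, derivable P t 1) ->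
  (forall t, in_TstarV (X t) (P t)) ->
  (forall t, system1 kappa Gamma X P t) <-> (forall t, system2 kappa Gamma X P t).
Proof.
move=> _ hX hP hT; split => H t; have [hXX hc] := hT t.
- have [e1 e2] := H t; move: e1 e2; rewrite /system2 !derive1E => e1 e2.
  rewrite (@derive_Phi _ _ _ X P t (hX t) (hP t)) (@derive_Psi _ _ _ X P t (hX t) (hP t)).
  split; first by rewrite e1 alg1.
  split; [exact: alg2a e1 e2 | exact: algPsi hXX e1 e2].
- have [e1 [e2 e3]] := H t; move: e1 e2 e3; rewrite /system1 !derive1E => e1 e2 e3.
  have e1' : 'D_1 X t = P t - (1 + 2%:R * kappa) *: (X t *m (P t)^T *m X t).
    by rewrite e1 alg1.
  split => //.
  have heq : P = fun s => Phi (X s) (P s) *m X s - 2^-1 *: (X s *m Psi (X s) (P s)).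
    apply/funext => s; have [h1 h2] := hT s; exact: algP0.
  rewrite (@derive_P0 _ _ _ X P t (hX t) (hP t) heq) e2 e3.
  exact: algP.
Qed.
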